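(* Let $k\ge 1$ be an integer and let $G$ be a graph with $\mathrm{diam}(G)\le 2k+1$. Then $\mathrm{gp}(G)\ge \alpha_k(G)$.
   Context: All graphs are finite, simple and connected; $\mathrm{diam}(G)$ is the maximum distance between two vertices. A set $S$ of vertices is a $k$-packing if $d(u,v)>k$ for all distinct $u,v\in S$; $\alpha_k(G)$ is the maximum cardinality of a $k$-packing of $G$. A set of vertices is a general position set if no three of its vertices lie on a common geodesic (shortest path); $\mathrm{gp}(G)$ is the maximum cardinality of a general position set of $G$. *)

(* Defs.v *)
From mathcomp Require Import all_boot.
Set Implicit Arguments. Unset Strict Implicit. Unset Printing Implicit Defensive.

Definition simple_graph (T : finType) (e : rel T) : Prop :=
  symmetric e /\ irreflexive e.
Definition connected_graph (T : finType) (e : rel T) : Prop :=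
  forall u v : T, connect e u v.

Section Graph.
Variables (T : finType) (e : rel T).

(* A walk from u to v with vertex sequence u :: p ; its length is size p. *)
Definition walk (u v : T) (p : seq T) : bool := path e u p && (last u p == v).

Definition has_walk_of_length (u v : T) (n : nat) : bool :=
  [exists t : n.-tuple T, walk u v t].

(* Distance: the least length of a walk from u to v (searched below #|T|,
   which is exact in a connected graph since shortest walks are paths). *)
Definition dist (u v : T) : nat :=
  find (has_walk_of_length u v) (iota 0 #|T|).

Definition geodesic (u v : T) (p : seq T) : bool :=
  walk u v p && (size p == dist u v).

(* x, y, z lie on a common geodesic (a shortest u-v walk, for some u, v);
   a geodesic from u to v has exactly dist u v edges, so it is a tuple. *)
Definition on_common_geodesic (x y z : T) : bool :=
  [exists u : T, exists v : T, exists t : (dist u v).-tuple T,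
     [&& geodesic u v t, x \in u :: t, y \in u :: t & z \in u :: t]].

Definition gp_set (S : {set T}) : bool :=
  [forall x in S, forall y in S, forall z in S,
    [&& x != y, y != z & x != z] ==> ~~ on_common_geodesic x y z].

Definition k_packing (k : nat) (S : {set T}) : bool :=
  [forall u in S, forall v in S, (u != v) ==> (k < dist u v)].

Definition diam : nat := \max_(u : T) \max_(v : T) dist u v.

Definition gp_number : nat :=
  \max_(S : {set T} | gp_set S) #|S|.

Definition packing_number (k : nat) : nat :=
  \max_(S : {set T} | k_packing k S) #|S|.

End Graph.

(* Main.v *)
Require Import Defs.
From mathcomp Require Import all_boot.
From mathcomp Require Import zify.

Section Aux.
Variables (T : finType) (e : rel T).

Lemma dist_le (u v : T) (q : seq T) : walk e u v q -> dist e u v <= size q.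
Proof.
move=> W; rewrite leqNgt; apply/negP => Hlt.
have Hs : dist e u v <= size (iota 0 #|T|) by rewrite /dist find_size.
rewrite size_iota in Hs.
have := before_find 0 Hlt; rewrite nth_iota; last by apply: leq_trans Hs.
rewrite add0n /has_walk_of_length => /negbT/negP; apply.
by apply/existsP; exists (in_tuple q).
Qed.

Lemma dist_walk (u v : T) : connect e u v ->
  exists q, walk e u v q /\ size q = dist e u v.
Proof.
case/connectP => p P ->.
case: (shortenP P) => p' P' U _.
have Hsz : size p' < #|T|.
  rewrite cardE -(size_map id) map_id.
  have := @uniq_leq_size _ (u :: p') (enum T) U (fun x _ => mem_enum T x).
  by [].
have Hh : has (has_walk_of_length e u (last u p')) (iota 0 #|T|).
  apply/hasP; exists (size p'); first by rewrite mem_iota.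
  apply/existsP; exists (in_tuple p'); by rewrite /walk P' /=.
have Hf := nth_find 0 Hh.
rewrite -/(dist e u (last u p')) nth_iota ?add0n in Hf; last by move: Hh; rewrite has_find size_iota.
case/existsP: Hf => t Ht; exists t; split => //; exact: size_tuple.
Qed.

Lemma dist_prefix (x : T) (p : seq T) (j : nat) : path e x p -> j <= size p ->
  dist e x (nth x (x :: p) j) <= j.
Proof.
move=> P Hj.
have -> : j = size (take j p) by rewrite size_take; case: ltngtP Hj => //; lia.
apply: dist_le; rewrite /walk take_path //= (last_nth x) size_take.
case: ltngtP Hj => // [Hlt _|-> _]; last by rewrite take_size.
case: j Hlt => //= j Hlt; rewrite nth_take //.
Qed.

Lemma dist_seg (i : nat) : forall (x : T) (p : seq T) (j : nat), path e x p -> i <= j -> j <= size p ->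
  dist e (nth x (x :: p) i) (nth x (x :: p) j) <= j - i.
Proof.
elim: i => [|i IH] x p j P Hij Hj; first by rewrite subn0; apply: dist_prefix.
case: p P Hj => [|y p] P Hj; first by move: Hj; rewrite /=; lia.
case/andP: P => _ P.
case: j Hij Hj => // j Hij Hj.
rewrite subSS /= (@set_nth_default _ _ y x i) ?(@set_nth_default _ _ y x j) /=; [exact: IH| |]; move: Hij Hj => /=; lia.
Qed.

Lemma dist_tri (a b c : T) : connected_graph e ->
  dist e a c <= dist e a b + dist e b c.
Proof.
move=> C.
case: (@dist_walk a b (C a b)) => p [/andP [P1 /eqP L1] S1].
case: (@dist_walk b c (C b c)) => q [/andP [P2 /eqP L2] S2].
rewrite -S1 -S2 -size_cat; apply: dist_le.
by rewrite /walk cat_path P1 L1 P2 last_cat L1 L2 eqxx.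
Qed.

Lemma core (k : nat) (u v : T) (t : seq T) (i j l : nat) : connected_graph e ->
  geodesic e u v t -> i < j -> j < l -> l <= size t ->
  k < dist e (nth u (u :: t) i) (nth u (u :: t) j) ->
  k < dist e (nth u (u :: t) j) (nth u (u :: t) l) ->
  dist e (nth u (u :: t) i) (nth u (u :: t) l) <= 2 * k + 1 -> False.
Proof.
move=> C /andP [/andP [P /eqP L] /eqP S] Hij Hjl Hl H1 H2 H3.
set a := nth u (u :: t) i in H1 H3 *.
set b := nth u (u :: t) j in H1 H2 *.
set c := nth u (u :: t) l in H2 H3 *.
have E1 : dist e a b <= j - i by apply: dist_seg => //; lia.
have E2 : dist e b c <= l - j by apply: dist_seg => //; lia.
have E3 : dist e u a <= i - 0 by apply: (@dist_seg 0 u t i P) => //; lia.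
have E4 : dist e c v <= size t - l.
  have -> : v = nth u (u :: t) (size t) by rewrite -L (last_nth u).
  by apply: dist_seg.
have T1 := dist_tri u a v C.
have T2 := dist_tri a c v C.
lia.
Qed.
End Aux.

Lemma no_cycle (a b c : nat) : a < b -> b < c -> c < a -> False.
Proof. lia. Qed.

Lemma dist_diam (T : finType) (e : rel T) (a b : T) : dist e a b <= diam e.
Proof.
apply: leq_trans (leq_bigmax a); exact: (leq_bigmax (F := fun v => dist e a v) b).
Qed.

Theorem corollary4p2 (T : finType) (e : rel T) (k : nat) :
  simple_graph e -> connected_graph e -> 1 <= k ->
  diam e <= 2 * k + 1 ->
  packing_number e k <= gp_number e.
Proof.
move=> _ C Hk Hd.
apply/bigmax_leqP => S HS; apply: leq_bigmax_cond.
have pk : forall a b, a \in S -> b \in S -> a != b -> k < dist e a b.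
  move=> a b Ha Hb Hab.
  by move/forallP: HS => /(_ a) /implyP /(_ Ha) /forallP /(_ b) /implyP /(_ Hb) /implyP /(_ Hab).
apply/forallP => x; apply/implyP => Hx; apply/forallP => y; apply/implyP => Hy.
apply/forallP => z; apply/implyP => Hz; apply/implyP => /and3P [nxy nyz nxz].
apply/negP => /existsP [u /existsP [v /existsP [t /and4P [G Xi Yi Zi]]]].
set s := u :: (t : seq T) in Xi Yi Zi.
have key : forall a b c, a \in S -> b \in S -> c \in S -> a != b -> b != c -> a != c ->
    a \in s -> b \in s -> c \in s -> index a s < index b s -> index b s < index c s -> False.
  move=> a b c Ha Hb Hc nab nbc nac As Bs Cs I1 I2.
  have Cl : index c s <= size t by move: Cs; rewrite -index_mem.
  apply: (@core T e k u v t _ _ _ C G I1 I2 Cl); rewrite ?nth_index //.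
  - exact: pk.
  - exact: pk.
  - exact: (leq_trans (dist_diam T e a c) Hd).
have inj : forall a b, a \in s -> a != b -> index a s != index b s.
  move=> a b As nab; apply/eqP => E; move/eqP: nab; apply.
  by rewrite -(nth_index u As) E nth_index // -index_mem -E index_mem.
have sym : forall a b : T, a != b -> b != a by move=> a b; rewrite eq_sym.
have ixy := inj _ _ Xi nxy; have iyz := inj _ _ Yi nyz; have ixz := inj _ _ Xi nxz.
case: (ltngtP (index x s) (index y s)) ixy => // H1 _;
case: (ltngtP (index y s) (index z s)) iyz => // H2 _;
case: (ltngtP (index x s) (index z s)) ixz => // H3 _;
first [ exact: (key x y z Hx Hy Hz nxy nyz nxz Xi Yi Zi H1 H2)
      | exact: (key x z y Hx Hz Hy nxz (sym _ _ nyz) nxy Xi Zi Yi H3 H2)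
      | exact: (key y x z Hy Hx Hz (sym _ _ nxy) nxz nyz Yi Xi Zi H1 H3)
      | exact: (key y z x Hy Hz Hx nyz (sym _ _ nxz) (sym _ _ nxy) Yi Zi Xi H2 H3)
      | exact: (key z x y Hz Hx Hy (sym _ _ nxz) nxy (sym _ _ nyz) Zi Xi Yi H3 H1)
      | exact: (key z y x Hz Hy Hx (sym _ _ nyz) (sym _ _ nxy) (sym _ _ nxz) Zi Yi Xi H2 H1)
      | exact: (no_cycle H1 H2 H3)
      | exact: (no_cycle H3 (ltnW H2) H1)
      | exact: (no_cycle H2 H1 H3) ].
Qed.
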